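(* Let $F$ be a field without maximal subrings and $D$ a non-commutative division ring with center $F$. If $R$ is a maximal subring of $D$, then $F\subseteq R$.
   Context: All rings are associative unital and subrings share the identity. A maximal subring of a ring $T$ is a proper subring maximal under inclusion among proper subrings of $T$. *)

(* Defs.v *)
From mathcomp Require Import all_boot all_algebra.
Set Implicit Arguments. Unset Strict Implicit. Unset Printing Implicit Defensive.
Import GRing.Theory.
Local Open Scope ring_scope.

Definition is_subring (T : unitRingType) (S : T -> Prop) : Prop :=
  [/\ S 1, (forall x y, S x -> S y -> S (x - y))
    & (forall x y, S x -> S y -> S (x * y))].

Definition center (T : unitRingType) : T -> Prop :=
  fun x => forall y : T, x * y = y * x.

(* D is a division ring: every nonzero element is a unit
   (a unitRingType is already nontrivial, 1 != 0). *)
Definition is_division_ring (T : unitRingType) : Prop :=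
  forall x : T, x != 0 -> x \is a GRing.unit.

Definition maximal_subring_of (T : unitRingType) (A S : T -> Prop) : Prop :=
  [/\ is_subring S,
      (forall x, S x -> A x),
      (exists x, A x /\ ~ S x)
    & (forall S' : T -> Prop, is_subring S' ->
         (forall x, S x -> S' x) ->
         (forall x, S' x -> A x) ->
         (exists x, A x /\ ~ S' x) ->
         forall x, S' x -> S x)].

(* Main.v *)
Require Import Defs.
From mathcomp Require Import all_boot all_algebra.
From Stdlib Require Import Classical.
Set Implicit Arguments. Unset Strict Implicit. Unset Printing Implicit Defensive.
Import GRing.Theory.
Local Open Scope ring_scope.

Lemma sr0 (D : unitRingType) (R : D -> Prop) : is_subring R -> R 0.
Proof. by case=> h1 hB _; rewrite -(subrr 1); apply: hB. Qed.
Lemma srN (D : unitRingType) (R : D -> Prop) x : is_subring R -> R x -> R (- x).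
Proof. move=> hR hx; have -> : - x = 0 - x by rewrite sub0r.
by case: (hR) => _ hB _; apply: hB => //; exact: sr0. Qed.
Lemma srD (D : unitRingType) (R : D -> Prop) x y : is_subring R -> R x -> R y -> R (x + y).
Proof. move=> hR hx hy; rewrite -(opprK y); case: (hR) => _ hB _; apply: hB => //; exact: srN. Qed.
Lemma srB (D : unitRingType) (R : D -> Prop) x y : is_subring R -> R x -> R y -> R (x - y).
Proof. by case=> _ hB _; apply: hB. Qed.
Lemma srM (D : unitRingType) (R : D -> Prop) x y : is_subring R -> R x -> R y -> R (x * y).
Proof. by case=> _ _ hM; apply: hM. Qed.
Lemma sr1 (D : unitRingType) (R : D -> Prop) : is_subring R -> R 1.
Proof. by case. Qed.
Lemma srX (D : unitRingType) (R : D -> Prop) x n : is_subring R -> R x -> R (x ^+ n).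
Proof. move=> hR hx; elim: n => [|n IH]; first by rewrite expr0; exact: sr1.
by rewrite exprS; apply: srM. Qed.

Lemma center_sub (D : unitRingType) : is_subring (@center D).
Proof.
split; first by move=> y; rewrite mul1r mulr1.
- by move=> x y hx hy z; rewrite mulrBl mulrBr hx hy.
- by move=> x y hx hy z; rewrite -mulrA hy mulrA hx mulrA.
Qed.

Fixpoint W (D : unitRingType) (R : D -> Prop) (z : D) (n : nat) : D -> Prop :=
  match n with
  | 0 => fun d => d = 0
  | n'.+1 => fun d => exists r d', R r /\ W R z n' d' /\ d = r + z * d'
  end.

Lemma W0 (D : unitRingType) (R : D -> Prop) z n : is_subring R -> W R z n 0.
Proof.
move=> hR; case: n => [|n] //=; exists 0, 0; split; first exact: sr0.
split; last by rewrite mulr0 addr0.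
by elim: n => [|n IH] //=; exists 0, 0; split; [exact: sr0|split=>//; rewrite mulr0 addr0].
Qed.

Lemma Wmono (D : unitRingType) (R : D -> Prop) z n d : is_subring R -> W R z n d -> W R z n.+1 d.
Proof.
move=> hR; elim: n d => [|n IH] d /=.
  by move=> ->; exists 0, 0; split; [exact: sr0|split=>//; rewrite mulr0 addr0].
by case=> r [d' [hr [hd' ->]]]; exists r, d'; split=>//; split=>//; apply: IH.
Qed.

Lemma Wle (D : unitRingType) (R : D -> Prop) z n m d : is_subring R -> (n <= m)%N -> W R z n d -> W R z m d.
Proof.
move=> hR /subnK <-; elim: (m - n)%N => [|k IH] hd; first by rewrite add0n.
by rewrite addSn; apply: Wmono => //; apply: IH.
Qed.

Lemma WB (D : unitRingType) (R : D -> Prop) z n a b : is_subring R -> W R z n a -> W R z n b -> W R z n (a - b).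
Proof.
move=> hR; elim: n a b => [|n IH] a b /=; first by move=> -> ->; rewrite subr0.
case=> r [a' [hr [ha ->]]] [r' [b' [hr' [hb ->]]]].
exists (r - r'), (a' - b'); split; first exact: srB.
split; first exact: IH.
by rewrite mulrBr opprD addrACA.
Qed.

Lemma WN (D : unitRingType) (R : D -> Prop) z n a : is_subring R -> W R z n a -> W R z n (- a).
Proof. by move=> hR ha; rewrite -sub0r; apply: WB => //; apply: W0. Qed.

Lemma WD (D : unitRingType) (R : D -> Prop) z n a b : is_subring R -> W R z n a -> W R z n b -> W R z n (a + b).
Proof. by move=> hR ha hb; rewrite -(opprK b); apply: WB => //; apply: WN. Qed.

Lemma WlR (D : unitRingType) (R : D -> Prop) z n r d : is_subring R -> center z -> R r -> W R z n d -> W R z n (r * d).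
Proof.
move=> hR hz hr; elim: n d => [|n IH] d /=; first by move=> ->; rewrite mulr0.
case=> r0 [d' [hr0 [hd ->]]]; exists (r * r0), (r * d'); split; first exact: srM.
split; first exact: IH.
by rewrite mulrDr mulrA -hz mulrA.
Qed.

Lemma WrR (D : unitRingType) (R : D -> Prop) z n r d : is_subring R -> R r -> W R z n d -> W R z n (d * r).
Proof.
move=> hR hr; elim: n d => [|n IH] d /=; first by move=> ->; rewrite mul0r.
case=> r0 [d' [hr0 [hd ->]]]; exists (r0 * r), (d' * r); split; first exact: srM.
split; first exact: IH.
by rewrite mulrDl mulrA.
Qed.

Lemma WR (D : unitRingType) (R : D -> Prop) z n r : is_subring R -> R r -> W R z n.+1 r.
Proof. move=> hR hr /=; exists r, 0; split=>//; split; [exact: W0|by rewrite mulr0 addr0]. Qed.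

Lemma Wz (D : unitRingType) (R : D -> Prop) z n d : is_subring R -> W R z n d -> W R z n.+1 (z * d).
Proof. move=> hR hd /=; exists 0, d; split; [exact: sr0|split=>//; by rewrite add0r]. Qed.

Lemma Wzk (D : unitRingType) (R : D -> Prop) z n k d : is_subring R -> W R z n d -> W R z (n + k) (z ^+ k * d).
Proof.
move=> hR hd; elim: k => [|k IH]; first by rewrite addn0 expr0 mul1r.
by rewrite addnS exprS -mulrA; apply: Wz.
Qed.

Lemma Wmul (D : unitRingType) (R : D -> Prop) z n m a b : is_subring R -> center z -> W R z n a -> W R z m b -> W R z (n + m) (a * b).
Proof.
move=> hR hz; elim: n a => [|n IH] a; first by move=> /= -> _; rewrite mul0r; apply: W0.
case=> r [a' [hr [ha ->]]] hb; rewrite mulrDl -mulrA addSn.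
apply: WD => //; last by apply: Wz => //; exact: (IH a' ha hb).
apply: (@Wle _ _ _ m) => //; first by rewrite leqW // leq_addl.
exact: WlR.
Qed.

Lemma Wsplit (D : unitRingType) (R : D -> Prop) z n d : is_subring R -> center z -> W R z n.+1 d ->
  exists p a, W R z n p /\ R a /\ d = p + a * z ^+ n.
Proof.
move=> hR hz; elim: n d => [|n IH] d /=.
  by case=> r [d' [hr [-> ->]]]; exists 0, r; rewrite mulr0 addr0 add0r expr0 mulr1.
case=> r [d' [hr [hd ->]]]; case: (IH _ hd) => p [a [hp [ha ->]]].
exists (r + z * p), a; split; first by exists r, p.
split=>//; rewrite mulrDr addrA; congr (_ + _).
by rewrite exprS mulrA hz -mulrA.
Qed.

Lemma Wmon (D : unitRingType) (R : D -> Prop) z n a : is_subring R -> center z -> R a -> W R z n.+1 (a * z ^+ n).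
Proof.
move=> hR hz ha; have := @Wzk _ R z 1 n a hR (@WR _ R z 0 a hR ha); rewrite add1n.
have hzn : center (z ^+ n) by elim: n => [|n IH] y; [rewrite expr0 mul1r mulr1|rewrite exprS -mulrA IH mulrA hz mulrA].
by rewrite hzn.
Qed.


Lemma full (D : unitRingType) (R : D -> Prop) : maximal_subring_of (fun _ => True) R ->
  forall Q, is_subring Q -> (forall x, R x -> Q x) -> forall s, Q s -> ~ R s -> forall d, Q d.
Proof.
case=> _ _ _ hmax Q hQ hRQ s hQs hRs d; apply: NNPP => hd.
by apply: hRs; apply: (hmax Q hQ hRQ) => //; exists d.
Qed.

Lemma Wany_sub (D : unitRingType) (R : D -> Prop) z : is_subring R -> center z ->
  is_subring (fun d => exists n, W R z n d).
Proof.
move=> hR hz; split.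
- by exists 1%N; apply: WR => //; exact: sr1.
- move=> x y [n hx] [m hy]; exists (maxn n m); apply: WB => //.
  + by apply: Wle hx => //; rewrite leq_maxl.
  + by apply: Wle hy => //; rewrite leq_maxr.
- by move=> x y [n hx] [m hy]; exists (n + m)%N; apply: Wmul.
Qed.

Lemma ex_min (P : nat -> Prop) : (exists n, P n) -> exists n, P n /\ forall m, (m < n)%N -> ~ P m.
Proof.
case=> n; elim: n {-2}n (leqnn n) => [|k IH] n hn hPn.
  by exists n; split => // m; move: hn; rewrite leqn0 => /eqP ->; rewrite ltn0.
case: (classic (exists m, (m < n)%N /\ P m)) => [[m [hm hPm]]|hno].
  by apply: (IH m) => //; rewrite -ltnS (leq_trans hm hn).
by exists n; split => // m hm hPm; apply: hno; exists m.
Qed.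

Lemma centerV (D : unitRingType) (z : D) : center z -> center z^-1.
Proof. by move=> hz y; apply/commr_sym/commrV/commr_sym; rewrite /GRing.comm hz. Qed.

Lemma centerX (D : unitRingType) (z : D) n : center z -> center (z ^+ n).
Proof. by move=> hz y; apply/commr_sym/commrX/commr_sym; rewrite /GRing.comm hz. Qed.

Lemma caseV (D : unitRingType) (R : D -> Prop) : maximal_subring_of (fun _ => True) R ->
  forall s, center s -> ~ R s -> s \is a GRing.unit -> R s^-1 ->
  forall S, is_subring S -> (forall c, center c -> R c -> S c) -> S s ->
  forall f, center f -> S f.
Proof.
move=> hmax; have hR : is_subring R by case: hmax.
move=> s hs nRs hu hRi S hS hC hSs f hf.
pose t := s^-1.
have ht : center t by apply: centerV.
have hQ : is_subring (fun d => exists n, R (d * t ^+ n)).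
  split.
  - by exists 0%N; rewrite expr0 mulr1; exact: sr1.
  - move=> x y [n hx] [m hy]; exists (n + m)%N.
    rewrite mulrBl exprD; apply: srB => //.
      by rewrite mulrA; apply: srM => //; apply: srX.
    by rewrite (centerX n ht) mulrA; apply: srM => //; apply: srX.
  - move=> x y [n hx] [m hy]; exists (n + m)%N.
    rewrite exprD -mulrA (mulrA y) -(centerX n ht) !mulrA -mulrA; exact: srM.
have [n hn] : exists n, R (f * t ^+ n).
  apply: (@full D R hmax _ hQ _ s _ nRs f).
  - by move=> x hx; exists 0%N; rewrite expr0 mulr1.
  - by exists 1%N; rewrite expr1 mulrV //; exact: sr1.
have hc : center (f * t ^+ n) by apply: (srM (center_sub D)) => //; apply: centerX.
have -> : f = (f * t ^+ n) * s ^+ n.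
  by rewrite -mulrA -exprMn_comm ?mulVr ?expr1n ?mulr1 // /GRing.comm hs.
by apply: srM => //; [apply: hC|apply: srX].
Qed.


Lemma transfer (D : unitRingType) (R : D -> Prop) z w n d : is_subring R -> center z -> center w ->
  z * w = 1 -> W R z n d -> W R w n.+1 (d * w ^+ n).
Proof.
move=> hR hz hw hzw; elim: n d => [|n IH] d.
  by move=> hd0; have -> : d = 0 := hd0; rewrite mul0r; apply: W0.
case=> r [d' [hr [hd ->]]].
have -> : (r + z * d') * w ^+ n.+1 = r * w ^+ n.+1 + d' * w ^+ n.
  rewrite mulrDl exprS; congr (_ + _).
  by rewrite (hz d') -!mulrA (mulrA z) hzw mul1r.
apply: WD => //; first exact: Wmon.
by apply: Wmono => //; apply: IH.
Qed.

Lemma centerW (D : unitRingType) (R : D -> Prop) z n a d : is_subring R -> center z ->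
  (forall r, R r -> a * r = r * a) -> W R z n d -> a * d = d * a.
Proof.
move=> hR hz ha; elim: n d => [|n IH] d; first by move=> /= ->; rewrite mulr0 mul0r.
case=> r [d' [hr [hd ->]]].
by rewrite mulrDr mulrDl ha // mulrA -hz -mulrA IH // mulrA.
Qed.

Lemma sumfact (D : unitRingType) (p r X : D) :
  p * r + X * r = r * p + r * X -> r * X - X * r = p * r - r * p.
Proof.
move=> e; have e2 : r * X = p * r + X * r - r * p by rewrite e addrAC subrr add0r.
by rewrite e2 addrAC addrK.
Qed.

Lemma caseI (D : unitRingType) (R : D -> Prop) : is_division_ring D ->
  maximal_subring_of (fun _ => True) R ->
  forall s, center s -> ~ R s -> s \is a GRing.unit -> ~ R s^-1 ->
  forall S, is_subring S -> (forall c, center c -> R c -> S c) -> S s ->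
  forall f, center f -> S f.
Proof.
move=> hdiv hmax; have hR : is_subring R by case: hmax.
move=> s hs nRs hu nRi S hS hC hSs f hf.
have hy : center s^-1 := centerV hs.
have hys : s^-1 * s = 1 by rewrite mulVr.
have [n hn] : exists n, W R s^-1 n s.
  apply: (@full D R hmax _ (Wany_sub hR hy) _ s^-1 _ nRi s).
  - by move=> x hx; exists 1%N; apply: WR.
  - exists 2%N; have h := @Wz _ R s^-1 1 1 hR (@WR _ R s^-1 0 1 hR (sr1 hR)).
    by rewrite mulr1 in h.
have hN0 : exists N, W R s N (s ^+ N).
  by exists n.+1; rewrite exprS; exact: (transfer hR hy hs hys hn).
have [N [hN hmin]] := ex_min hN0.
case: N hN hmin => [|N] hN hmin.
  by move: hN => /= /eqP; rewrite expr0 oner_eq0.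
have hsN : forall d, W R s N.+1 d -> W R s N.+1 (s * d).
  move=> d hd; case: (Wsplit hR hs (Wz hR hd)) => p [a [hp [ha ->]]].
  by apply: WD => //; apply: WlR.
have hall : forall m d, W R s m d -> W R s N.+1 d.
  elim=> [|m IH] d.
  - by move=> hd0; have -> : d = 0 := hd0; exact: W0.
  - case=> r [d' [hr [hd ->]]]; apply: WD => //; [exact: WR | apply: hsN; exact: IH].
have hD : forall d, W R s N.+1 d.
  move=> d; have [m hm] : exists m, W R s m d.
    apply: (@full D R hmax _ (Wany_sub hR hs) _ s _ nRs d).
    - by move=> x hx; exists 1%N; apply: WR.
    - exists 2%N; have h := @Wz _ R s 1 1 hR (@WR _ R s 0 1 hR (sr1 hR)).
      by rewrite mulr1 in h.
  exact: hall hm.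
have hind : forall k b, (k < N.+1)%N -> R b -> W R s k (b * s ^+ k) -> b = 0.
  move=> k b hk hb hbk; apply: NNPP => hb0.
  have hA : forall i d, W R s (k + i).+1 d -> W R s (k + i) (b * d).
    move=> i d hd; case: (Wsplit hR hs hd) => p [a [hp [ha ->]]].
    rewrite mulrDr; apply: WD => //; first exact: WlR.
    have -> : b * (a * s ^+ (k + i)) = s ^+ i * (b * s ^+ k * a).
      rewrite exprD (centerX i hs) -!mulrA; congr (b * _).
      by rewrite !mulrA -(centerX k hs a).
    by apply: Wzk => //; apply: WrR.
  have hB : forall m d, W R s (k + m) d -> W R s k (b ^+ m * d).
    elim=> [|m IH] d hd; first by rewrite expr0 mul1r; rewrite addn0 in hd.
    by rewrite exprSr -mulrA; apply: IH; apply: hA; rewrite -addnS.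
  have hbu : b ^+ (N.+1 - k) \is a GRing.unit by apply: unitrX; apply: hdiv; apply/eqP.
  have := hB (N.+1 - k)%N ((b ^+ (N.+1 - k))^-1 * s ^+ k).
  rewrite subnKC ?(ltnW hk) // mulrA mulrV // mul1r => h.
  by apply: (hmin k hk); apply: h; apply: hD.
have hmain : forall n, (n <= N.+1)%N -> forall d, W R s n d -> center d -> S d.
  elim=> [|m IH] hm d hd hcd.
    by have -> : d = 0 := hd; exact: sr0.
  case: (Wsplit hR hs hd) => p [a [hp [ha hdd]]].
  have hca : center a.
    have hRa : forall r, R r -> a * r = r * a.
      move=> r hr.
      have e : p * r + (a * s ^+ m) * r = r * p + r * (a * s ^+ m).
        by rewrite -mulrDl -mulrDr -hdd hcd.
      have := sumfact e.
      have -> : r * (a * s ^+ m) - (a * s ^+ m) * r = (r * a - a * r) * s ^+ m.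
        by rewrite mulrBl mulrA -(mulrA a) (centerX m hs r) mulrA.
      move=> e'.
      have := hind m (r * a - a * r) hm (srB hR (srM hR hr ha) (srM hR ha hr)).
      rewrite e' => h2; have h3 := h2 (WB hR (WrR hR hr hp) (WlR hR hs hr hp)).
      by move/eqP: h3; rewrite subr_eq0 => /eqP ->.
    by move=> z; apply: (centerW hR hs hRa (hD z)).
  have hcp : center p.
    have -> : p = d - a * s ^+ m by rewrite hdd addrK.
    by apply: (srB (center_sub D)) => //; apply: (srM (center_sub D)) => //; apply: centerX.
  rewrite hdd; apply: (srD hS); first by apply: IH => //; apply: ltnW.
  by apply: (srM hS); [apply: hC | apply: srX].
exact: (hmain N.+1 (leqnn _) f (hD f) hf).
Qed.


Theorem corollary2p8 (D : unitRingType) :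
  is_division_ring D ->
  (exists x y : D, x * y != y * x) ->
  (* the field F := center D has no maximal subrings *)
  (forall S : D -> Prop, ~ maximal_subring_of (@center D) S) ->
  forall R : D -> Prop,
    maximal_subring_of (fun _ => True) R ->
    forall x : D, @center D x -> R x.
Proof.
move=> hdiv _ hnoF R hmax x hx; apply: NNPP => nRx.
have hR : is_subring R by case: hmax.
apply: (hnoF (fun c => center c /\ R c)); split.
- split.
  + by split; [exact: (sr1 (center_sub D)) | exact: sr1].
  + by move=> a b [ha hRa] [hb hRb]; split; [exact: (srB (center_sub D)) | exact: srB].
  + by move=> a b [ha hRa] [hb hRb]; split; [exact: (srM (center_sub D)) | exact: srM].
- by move=> c [].
- by exists x; split => // -[].
move=> S' hS' hCS hSF [y [hy nSy]] z hz; apply: NNPP => nCz; exfalso; apply: nSy.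
have hcz : center z := hSF z hz.
have nRz : ~ R z by move=> hRz; apply: nCz.
have hu : z \is a GRing.unit.
  by apply: hdiv; apply/eqP => z0; apply: nRz; rewrite z0; exact: sr0.
have hC : forall c, center c -> R c -> S' c by move=> c hc hr; apply: hCS.
case: (classic (R z^-1)) => h.
- exact: (caseV hmax hcz nRz hu h hS' hC hz hy).
- exact: (caseI hdiv hmax hcz nRz hu h hS' hC hz hy).
Qed.
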